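(* Consider Cobb--Douglas exchange economies with $n=2$ agents and $m=2$ commodities in which both agents hold a strictly positive amount of both commodities. Then the incentive ratio over this class of economies is $e^{1/e}$: for every such economy, every agent $i$ with true Cobb--Douglas utility $u_i$ and every Cobb--Douglas misreport $u_i'$, $$\frac{\max_{x'\in\mathcal{E}(u_i')}u_i(x_i')}{\min_{x\in\mathcal{E}(u_i)}u_i(x_i)}\le e^{1/e},$$ and this bound is tight.
   Context: An exchange economy with $n$ agents and $m$ commodities is a tuple $((u_i)_{i=1}^n,(e_i)_{i=1}^n)$, where $u_i:\mathbb{R}_+^m\to\mathbb{R}$ is agent $i$'s utility and $e_i\in\mathbb{R}_+^m$ its endowment; without loss of generality total endowment of each commodity is $1$. Given prices $p$, agent $i$'s demand is the set of maximizers of $u_i(x_i)$ subject to $p\cdot x_i\le p\cdot e_i$, $x_i\ge0$. A competitive equilibrium is a pair $(p,x)$, $p\in\mathbb{R}_+^m$, with markets clearing and each $x_i$ in agent $i$'s demand at $p$. With $u_{-i}$ and $e$ fixed, $\mathcal{E}(\tilde u_i)$ is the set of competitive equilibrium allocations when agent $i$ reports $\tilde u_i$ and all others report truthfully. The incentive ratio of a class of economies is the supremum over economies in the class, agents $i$ and admissible misreports $u_i'$ of $\max_{x'\in\mathcal{E}(u_i')}u_i(x_i')/\min_{x\in\mathcal{E}(u_i)}u_i(x_i)$ (misreported outcomes are evaluated by the true $u_i$). Cobb--Douglas utilities are $u(x)=\prod_{j=1}^m x_j^{\alpha_j}$ with $0\le\alpha_j\le1$, $\sum_j\alpha_j=1$.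 *)

(* Defs.v *)
From HB Require Import structures.
From mathcomp Require Import all_boot all_order all_algebra.
From mathcomp Require Import reals sequences exp.
Set Implicit Arguments. Unset Strict Implicit. Unset Printing Implicit Defensive.
Import Order.TTheory GRing.Theory Num.Theory.
Local Open Scope ring_scope.

Section Economy.
Variable R : realType.
Variables n m : nat.

(* A bundle of goods / a price vector / Cobb-Douglas exponent vector. *)
Definition bundle := 'I_m -> R.

Definition is_CD (a : bundle) : Prop :=
  (forall j, 0 <= a j <= 1) /\ \sum_(j < m) a j = 1.

(* u(x) = prod_j x_j ^ alpha_j, with powR (0 `^ 0 = 1). *)
Definition cd_util (a x : bundle) : R := \prod_(j < m) (x j) `^ (a j).

Definition budget (p e x : bundle) : Prop :=
  (forall j, 0 <= x j) /\ \sum_(j < m) p j * x j <= \sum_(j < m) p j * e j.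

Definition demand (a p e x : bundle) : Prop :=
  budget p e x /\ forall y, budget p e y -> cd_util a y <= cd_util a x.

Definition is_CE (a e : 'I_n -> bundle) (p : bundle) (x : 'I_n -> bundle) : Prop :=
  (forall j, 0 <= p j) /\
  (forall j, \sum_(i < n) x i j = \sum_(i < n) e i j) /\
  (forall i, demand (a i) p (e i) (x i)).

Definition CE_alloc (a e : 'I_n -> bundle) (x : 'I_n -> bundle) : Prop :=
  exists p, is_CE a e p x.

Definition pos_normalized (e : 'I_n -> bundle) : Prop :=
  (forall i j, 0 < e i j) /\ (forall j, \sum_(i < n) e i j = 1).

Definition misreport (a : 'I_n -> bundle) (i : 'I_n) (b : bundle) : 'I_n -> bundle :=
  fun k => if k == i then b else a k.

End Economy.

(* Main.v *)
Require Import Defs.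
From HB Require Import structures.
From mathcomp Require Import all_boot all_order all_algebra.
From mathcomp Require Import reals sequences exp.
From mathcomp Require Import ring lra.
Import Order.TTheory GRing.Theory Num.Theory.
Local Open Scope ring_scope.


Section S.
Variable R : realType.
Implicit Types a b g m : R.

Lemma powRE a g : 0 < a -> a `^ g = expR (g * ln a).
Proof. by move=> a0; rewrite /powR gt_eqF. Qed.

Lemma ln_le a m : 0 < a -> 0 < m -> ln a - ln m <= a / m - 1.
Proof.
move=> a0 m0; have := expR_ge1Dx (ln a - ln m).
rewrite expRB !lnK ?posrE //; lra.
Qed.

Lemma ln_lt a m : 0 < a -> 0 < m -> a != m -> ln a - ln m < a / m - 1.
Proof.
move=> a0 m0 am; have : ln a - ln m != 0.
  rewrite subr_eq0; apply/negP => /eqP h; move/eqP: am; apply.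
  by apply: ln_inj; rewrite ?posrE.
move=> /expR_gt1Dx; rewrite expRB !lnK ?posrE //; lra.
Qed.

Lemma amgm_pos g a b : 0 <= g <= 1 -> 0 < a -> 0 < b ->
  a `^ g * b `^ (1 - g) <= g * a + (1 - g) * b.
Proof.
move=> /andP[g0 g1] a0 b0.
set m := g * a + (1 - g) * b.
have m0 : 0 < m.
  rewrite /m; have [->|gp] := eqVneq g 0; first by rewrite mul0r add0r subr0 mul1r.
  have : 0 < g * a by apply: mulr_gt0 => //; rewrite lt_neqAle eq_sym gp.
  have : 0 <= (1 - g) * b by apply: mulr_ge0; lra.
  lra.
have h1 := @ln_le a m a0 m0. have h2 := @ln_le b m b0 m0.
have key : g * ln a + (1 - g) * ln b <= ln m.
  have e : g * (a / m) + (1 - g) * (b / m) = 1.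
    by rewrite !mulrA -mulrDl divff // gt_eqF.
  have : g * (ln a - ln m) + (1 - g) * (ln b - ln m) <= g * (a / m - 1) + (1 - g) * (b / m - 1).
    apply: lerD; apply: ler_wpM2l => //; lra.
  lra.
rewrite !powRE // -expRD -(lnK m0) ler_expR.
idtac.
lra.
Qed.

Lemma amgm_strict g a b : 0 < g < 1 -> 0 < a -> 0 < b -> a != b ->
  a `^ g * b `^ (1 - g) < g * a + (1 - g) * b.
Proof.
move=> /andP[g0 g1] a0 b0 ab.
set m := g * a + (1 - g) * b.
have m0 : 0 < m.
  have : 0 < g * a by apply: mulr_gt0.
  have : 0 < (1 - g) * b by apply: mulr_gt0; lra.
  rewrite /m; lra.
have am : a != m.
  apply/negP => /eqP h.
  have : (1 - g) * (b - a) = 0 by rewrite /m in h; lra.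
  move/eqP; rewrite mulf_eq0 => /orP[/eqP|/eqP]; first lra.
  by move/eqP; rewrite subr_eq0 eq_sym (negbTE ab).
have h1 := @ln_lt a m a0 m0 am. have h2 := @ln_le b m b0 m0.
have key : g * ln a + (1 - g) * ln b < ln m.
  have e : g * (a / m) + (1 - g) * (b / m) = 1.
    by rewrite !mulrA -mulrDl divff // gt_eqF.
  have : g * (ln a - ln m) + (1 - g) * (ln b - ln m) < g * (a / m - 1) + (1 - g) * (b / m - 1).
    apply: ltr_leD; [by rewrite ltr_pM2l | apply: ler_wpM2l => //; lra].
  lra.
rewrite !powRE // -expRD -(lnK m0) ltr_expR.
lra.
Qed.

Lemma amgm g a b : 0 <= g <= 1 -> 0 <= a -> 0 <= b ->
  a `^ g * b `^ (1 - g) <= g * a + (1 - g) * b.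
Proof.
move=> /andP[g0 g1] a0 b0.
have [->|gn0] := eqVneq g 0.
  by rewrite powRr0 subr0 powRr1 //; lra.
have [->|gn1] := eqVneq g 1.
  by rewrite powRr1 // subrr powRr0; lra.
have [->|an] := eqVneq a 0.
  rewrite powR0 // mul0r; have : 0 <= (1 - g) * b by apply: mulr_ge0; lra.
  lra.
have [->|bn] := eqVneq b 0.
  rewrite powR0 ?mulr0; last by rewrite subr_eq0 eq_sym.
  have : 0 <= g * a by apply: mulr_ge0. lra.
apply: amgm_pos; [by rewrite g0 g1| |]; rewrite lt_neqAle eq_sym ?an ?bn //.
Qed.

Lemma unb g0 g1 e0 U : 0 < e0 -> 0 < g1 ->
  (forall M, 0 <= M -> e0 `^ g0 * M `^ g1 <= U) -> False.
Proof.
move=> e0p g1p F.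
have ep : 0 < e0 `^ g0 by apply: powR_gt0.
set c := (`|U| + 1) / e0 `^ g0.
have cp : 0 < c by rewrite /c divr_gt0 // ltr_pwDr // normr_ge0.
have := F (c `^ (g1^-1)) (powR_ge0 _ _).
have -> : (c `^ g1^-1) `^ g1 = c.
  by rewrite -powRrM mulVf ?gt_eqF // powRr1 // ltW.
rewrite /c mulrC divfK ?gt_eqF //.
have := ler_norm U; lra.
Qed.

Lemma demand_scalar g0 g1 p0 p1 e0 e1 x0 x1 :
 0 <= g0 -> 0 <= g1 -> g0 + g1 = 1 -> 0 <= p0 -> 0 <= p1 -> 0 < e0 -> 0 < e1 ->
 0 <= x0 -> 0 <= x1 -> p0 * x0 + p1 * x1 <= p0 * e0 + p1 * e1 ->
 (forall y0 y1, 0 <= y0 -> 0 <= y1 -> p0 * y0 + p1 * y1 <= p0 * e0 + p1 * e1 ->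
    y0 `^ g0 * y1 `^ g1 <= x0 `^ g0 * x1 `^ g1) ->
 [/\ p0 * x0 = g0 * (p0 * e0 + p1 * e1), p1 * x1 = g1 * (p0 * e0 + p1 * e1),
     (p0 = 0 -> g0 = 0) & (p1 = 0 -> g1 = 0)].
Proof.
move=> g0p g1p g01 p0p p1p e0p e1p x0p x1p bud Hmax.
set U := x0 `^ g0 * x1 `^ g1.
set W := p0 * e0 + p1 * e1.
have W0 : 0 <= W by rewrite /W; apply: addr_ge0; apply: mulr_ge0 => //; apply: ltW.
have P1 : p1 = 0 -> g1 = 0.
  move=> p1z; apply/eqP; apply: contraT => gn; exfalso.
  apply: (@unb g0 g1 e0 U) => //; first by rewrite lt_neqAle eq_sym gn.
  move=> M M0; apply: Hmax => //; first exact: ltW.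
  rewrite /W p1z !mul0r; lra.
have P0 : p0 = 0 -> g0 = 0.
  move=> p0z; apply/eqP; apply: contraT => gn; exfalso.
  apply: (@unb g1 g0 e1 U) => //; first by rewrite lt_neqAle eq_sym gn.
  move=> M M0; rewrite mulrC; apply: Hmax => //; first exact: ltW.
  rewrite /W p0z !mul0r; lra.
have [g0z|g0n] := eqVneq g0 0.
  have g1e : g1 = 1 by lra.
  have p1p' : 0 < p1.
    rewrite lt_neqAle p1p andbT; apply/negP => /eqP h.
    have := P1 (esym h); lra.
  have := Hmax 0 (W / p1) (lexx _) (divr_ge0 W0 p1p).
  rewrite mulr0 add0r mulrC divfK ?gt_eqF // => /(_ (lexx _)).
  rewrite g0z g1e !powRr0 !mul1r !powRr1 ?divr_ge0 // => h.
  have : W <= p1 * x1 by rewrite -(ler_pM2l p1p') mulrC divfK ?gt_eqF // in h.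
  have : 0 <= p0 * x0 by apply: mulr_ge0.
  move=> h1 h2; rewrite /W in h1 h2 *; split; [lra|lra|by []|move=> hp; lra].
have [g1z|g1n] := eqVneq g1 0.
  have g0e : g0 = 1 by lra.
  have p0p' : 0 < p0.
    rewrite lt_neqAle p0p andbT; apply/negP => /eqP h.
    have := P0 (esym h); lra.
  have := Hmax (W / p0) 0 (divr_ge0 W0 p0p) (lexx _).
  rewrite mulr0 addr0 mulrC divfK ?gt_eqF // => /(_ (lexx _)).
  rewrite g1z g0e !powRr0 !mulr1 !powRr1 ?divr_ge0 // => h.
  have : W <= p0 * x0 by rewrite -(ler_pM2l p0p') mulrC divfK ?gt_eqF // in h.
  have : 0 <= p1 * x1 by apply: mulr_ge0.
  move=> h1 h2; rewrite /W in h1 h2 *; split; [lra|lra|move=> hp; lra|by []].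
have g0p' : 0 < g0 by rewrite lt_neqAle eq_sym g0n.
have g1p' : 0 < g1 by rewrite lt_neqAle eq_sym g1n.
have p0p' : 0 < p0.
  rewrite lt_neqAle p0p andbT; apply/negP => /eqP h.
  have := P0 (esym h); lra.
have p1p' : 0 < p1.
  rewrite lt_neqAle p1p andbT; apply/negP => /eqP h.
  have := P1 (esym h); lra.
have Wp : 0 < W by rewrite /W; have := mulr_gt0 p0p' e0p; have := mulr_gt0 p1p' e1p; lra.
set z0 := g0 * W / p0. set z1 := g1 * W / p1.
have z0p : 0 < z0 by rewrite /z0 divr_gt0 // mulr_gt0.
have z1p : 0 < z1 by rewrite /z1 divr_gt0 // mulr_gt0.
have Hz : z0 `^ g0 * z1 `^ g1 <= U.
  apply: Hmax; [exact: ltW|exact: ltW|].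
  have -> : p0 * z0 + p1 * z1 = (g0 + g1) * W.
    by rewrite /z0 /z1; field; rewrite !gt_eqF.
  by rewrite g01 mul1r.
set a := p0 * x0 / (g0 * W). set b := p1 * x1 / (g1 * W).
have a0 : 0 <= a by rewrite /a divr_ge0 ?mulr_ge0 // ltW.
have b0 : 0 <= b by rewrite /b divr_ge0 ?mulr_ge0 // ltW.
have xa : x0 = z0 * a.
  by rewrite /z0 /a; field; rewrite !gt_eqF.
have xb : x1 = z1 * b.
  by rewrite /z1 /b; field; rewrite !gt_eqF.
have uzp : 0 < z0 `^ g0 * z1 `^ g1 by apply: mulr_gt0; apply: powR_gt0.
have HU : U = (z0 `^ g0 * z1 `^ g1) * (a `^ g0 * b `^ g1).
  by rewrite /U xa xb (powRM g0 (ltW z0p) a0) (powRM g1 (ltW z1p) b0) mulrACA.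
have H1 : 1 <= a `^ g0 * b `^ g1.
  by move: Hz; rewrite HU ler_pMr.
have g1e : g1 = 1 - g0 by lra.
have sab : g0 * a + (1 - g0) * b <= 1.
  have ea : g0 * a = p0 * x0 / W by rewrite /a; field; rewrite !gt_eqF.
  have eb : g1 * b = p1 * x1 / W by rewrite /b; field; rewrite !gt_eqF.
  rewrite -g1e ea eb -mulrDl ler_pdivrMr // mul1r /W; lra.
have am := @amgm g0 a b. rewrite -g1e in am.
have ea : g0 * a = p0 * x0 / W by rewrite /a; field; rewrite !gt_eqF.
have eb : g1 * b = p1 * x1 / W by rewrite /b; field; rewrite !gt_eqF.
rewrite g1e in H1.
have aeb : a = b.
  apply/eqP; apply: contraT => ab; exfalso.
  have [az|an] := eqVneq a 0.
    by move: H1; rewrite az powR0 ?gt_eqF // mul0r; lra.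
  have [bz|bn] := eqVneq b 0.
    by move: H1; rewrite bz powR0 ?mulr0; [lra| rewrite subr_eq0 eq_sym; apply/negP => /eqP h; lra].
  have hg : 0 < g0 < 1 by apply/andP; split => //; lra.
  have := @amgm_strict g0 a b hg.
  rewrite lt_neqAle eq_sym an a0 lt_neqAle eq_sym bn b0 => /(_ isT isT ab).
  lra.
have a1 : a = 1.
  have h0 : 0 <= g0 <= 1 by apply/andP; split; lra.
  have := am h0 a0 b0; rewrite -aeb in H1 sab * => h. rewrite g1e in h. lra.
have b1 : b = 1 by rewrite -aeb.
have f0 : p0 * x0 = g0 * a * W by rewrite ea divfK // gt_eqF.
have f1 : p1 * x1 = g1 * b * W by rewrite eb divfK // gt_eqF.
rewrite a1 mulr1 in f0; rewrite b1 mulr1 in f1.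
split => // h; lra.
Qed.

Lemma kappa_ge g : 0 <= g <= 1 -> 1 <= g `^ g * expR (expR 1)^-1.
Proof.
move=> /andP[g0 g1].
have ep : 0 < (expR 1 : R)^-1 by rewrite invr_gt0 expR_gt0.
have [->|gn] := eqVneq g 0.
  rewrite powRr0 mul1r; have := expR_ge1Dx ((expR 1 : R)^-1); lra.
have gp : 0 < g by rewrite lt_neqAle eq_sym gn.
rewrite powRE // -expRD -{1}expR0 ler_expR.
have gi : 0 < g^-1 by rewrite invr_gt0.
have := @ln_le (g^-1) (expR 1) gi (expR_gt0 1).
rewrite expRK lnV ?posrE // => h.
have h2 : g * (- ln g) <= g * (g^-1 / expR 1) by apply: ler_wpM2l; [exact: ltW| lra].
rewrite mulrA mulfV ?gt_eqF // mul1r in h2. lra.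
Qed.
Lemma mul0_pos (x y : R) : x * y = 0 -> 0 < y -> x = 0.
Proof. move=> /eqP; rewrite mulf_eq0 => /orP[/eqP //|/eqP ->]; by rewrite ltxx. Qed.

Lemma LA (a b s t p0 p1 q0 q1 x0 x1 y0 y1 X0 X1 Y0 Y1 : R) :
 0 <= a <= 1 -> 0 <= b <= 1 -> 0 < s < 1 -> 0 < t < 1 ->
 0 <= p0 -> 0 <= p1 -> 0 < p0 + p1 -> 0 <= q0 -> 0 <= q1 -> 0 < q0 + q1 ->
 0 <= x0 -> 0 <= x1 -> 0 <= y0 -> 0 <= y1 -> x0 + y0 = 1 -> x1 + y1 = 1 ->
 p0 * y0 = b * (p0*(1-s) + p1*(1-t)) -> p1 * y1 = (1-b) * (p0*(1-s) + p1*(1-t)) ->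
 X0 + Y0 = 1 -> X1 + Y1 = 1 ->
 q0 * X0 = a * (q0*s + q1*t) -> q1 * X1 = (1-a)*(q0*s+q1*t) ->
 q0 * Y0 = b * (q0*(1-s) + q1*(1-t)) -> q1 * Y1 = (1-b)*(q0*(1-s) + q1*(1-t)) ->
 q0 * p1 <= p0 * q1 ->
 a * q0 * x0 + q1 * x1 <= q0 * s + q1 * t.
Proof.
move=> /andP[a0 a1] /andP[b0 b1] /andP[s0 s1] /andP[t0 t1] p0g p1g pp q0g q1g qq
  x0g x1g y0g y1g c0 c1 m0 m1 C0 C1 T0 T1 T2 T3 D.
have G : q1 = (1-a)*(q0*s+q1*t) + (1-b)*(q0*(1-s) + q1*(1-t)).
  have hX1 : X1 = 1 - Y1 by lra.
  rewrite hX1 in T1; lra.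
have e0 : p0 * x0 = p0 - b * (p0*(1-s) + p1*(1-t)).
  have -> : x0 = 1 - y0 by lra. lra.
have e1 : p1 * x1 = p1 - (1-b) * (p0*(1-s) + p1*(1-t)).
  have -> : x1 = 1 - y1 by lra. lra.
have [q1z|q1p] := eqVneq q1 0.
  subst q1. have q0p : 0 < q0 by lra.
  have ha : 1 - a = 0.
    apply: (@mul0_pos _ (q0 * s)); [lra| exact: mulr_gt0].
  have hb : 1 - b = 0.
    apply: (@mul0_pos _ (q0 * (1-s))); [lra| apply: mulr_gt0 => //; lra].
  have ha1 : a = 1 by lra. have hb1 : b = 1 by lra. subst a b.
  have [p0z|p0p] := eqVneq p0 0.
    subst p0. have : p1 * (1 - t) = 0 by lra.
    move=> /mul0_pos h. have : p1 = 0 by apply: h; lra. lra.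
  have p0p' : 0 < p0 by rewrite lt_neqAle eq_sym p0p.
  have : 0 <= p0 * (y0 - (1 - s)).
    have -> : p0 * (y0 - (1 - s)) = p1 * (1 - t) by lra.
    apply: mulr_ge0; lra.
  rewrite pmulr_rge0 // => hy.
  nra.
have q1p' : 0 < q1 by rewrite lt_neqAle eq_sym q1p.
have [p0z|p0p] := eqVneq p0 0.
  subst p0. have p1p : 0 < p1 by lra.
  have : q0 * p1 = 0 by apply/eqP; rewrite eq_le mulr_ge0 // andbT; lra.
  move=> /mul0_pos h. have q0z : q0 = 0 by apply: h.
  subst q0.
  have ha : a = 0.
    apply: (@mul0_pos _ (q1 * t)); [lra| exact: mulr_gt0].
  have hb : b = 0.
    apply: (@mul0_pos _ (q1 * (1-t))); [lra| apply: mulr_gt0 => //; lra].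
  subst a b.
  have : p1 * (y1 - (1 - t)) = 0 by lra.
  move=> /eqP; rewrite mulf_eq0 => /orP[/eqP hh|/eqP hh]; first lra.
  nra.
have p0p' : 0 < p0 by rewrite lt_neqAle eq_sym p0p.
have [p1z|p1p] := eqVneq p1 0.
  subst p1.
  have hb : 1 - b = 0.
    apply: (@mul0_pos _ (p0 * (1-s))); [lra| apply: mulr_gt0 => //; lra].
  have hb1 : b = 1 by lra. subst b.
  have : p0 * (y0 - (1 - s)) = 0 by lra.
  move=> /eqP; rewrite mulf_eq0 => /orP[/eqP hh|/eqP hh]; first lra.
  have hx0 : x0 = s by lra. subst x0.
  have h1 : q1 * x1 <= q1 by nra.
  have h2 : 0 <= a * q1 * t by apply: mulr_ge0; [apply: mulr_ge0|]; lra.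
  lra.
have p1p' : 0 < p1 by rewrite lt_neqAle eq_sym p1p.
set E := q0 * s + q1 * t - (a * q0 * x0 + q1 * x1).
set W := q0*s+q1*t. set W2 := q0*(1-s) + q1*(1-t). set V2 := p0*(1-s) + p1*(1-t).
set Dl := p0 * q1 - q0 * p1.
have HE : q1 * (p0 * p1 * E) = a*(1-a)*W*q0* p1 ^+ 2 + a*t*q1* p1*Dl + (1-b)*(1-s)*Dl*(p0*q1-a*q0* p1).
  have -> : p0 * p1 * E = p0* p1*W - a*q0* p1*(p0*x0) - q1* p0*(p1*x1) by rewrite /E /W; ring.
  rewrite e0 e1.
  apply/eqP; rewrite -subr_eq0; apply/eqP.
  transitivity ((p0* p1*q1 - a*q0* p1 ^+ 2) * ((1-a)*W + (1-b)*W2 - q1)).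
    rewrite /W /W2 /Dl /V2; ring.
  by rewrite /W /W2 -G subrr mulr0.
have : 0 <= q1 * (p0 * p1 * E).
  rewrite HE. have Dl0 : 0 <= Dl by rewrite /Dl; lra.
  have W0 : 0 <= W by rewrite /W; nra.
  have Dl1 : 0 <= p0 * q1 - a * q0 * p1.
    have : 0 <= (1-a) * (q0 * p1) by apply: mulr_ge0; [lra|apply: mulr_ge0].
    lra.
  apply: addr_ge0; [apply: addr_ge0|];
  repeat (apply: mulr_ge0); rewrite ?exprn_ge0 //; lra.
move=> H. have : 0 <= E.
  have h3 : 0 < q1 * (p0 * p1) by apply: mulr_gt0 => //; apply: mulr_gt0.
  by move: H; rewrite [q1 * _]mulrA (pmulr_rge0 _ h3).
move=> HE0; move: HE0; rewrite /E /W; lra.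
Qed.

Lemma upper_scalar (a b s t p0 p1 q0 q1 x0 x1 y0 y1 X0 X1 Y0 Y1 : R) :
 0 <= a <= 1 -> 0 <= b <= 1 -> 0 < s < 1 -> 0 < t < 1 ->
 0 <= p0 -> 0 <= p1 -> 0 < p0 + p1 -> 0 <= q0 -> 0 <= q1 -> 0 < q0 + q1 ->
 0 <= x0 -> 0 <= x1 -> 0 <= y0 -> 0 <= y1 -> x0 + y0 = 1 -> x1 + y1 = 1 ->
 p0 * y0 = b * (p0 * (1-s) + p1 * (1-t)) -> p1 * y1 = (1-b) * (p0 * (1-s) + p1 * (1-t)) ->
 X0 + Y0 = 1 -> X1 + Y1 = 1 ->
 q0 * X0 = a * (q0 * s + q1 * t) -> q1 * X1 = (1-a) * (q0 * s + q1 * t) ->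
 q0 * Y0 = b * (q0 * (1-s) + q1 * (1-t)) -> q1 * Y1 = (1-b) * (q0 * (1-s) + q1 * (1-t)) ->
 (forall z0 z1, 0 <= z0 -> 0 <= z1 -> q0 * z0 + q1 * z1 <= q0 * s + q1 * t ->
    z0 `^ a * z1 `^ (1 - a) <= X0 `^ a * X1 `^ (1 - a)) ->
 x0 `^ a * x1 `^ (1 - a) <= expR (expR 1)^-1 * (X0 `^ a * X1 `^ (1 - a)).
Proof.
move=> ha hb hs ht p0g p1g pp q0g q1g qq x0g x1g y0g y1g c0 c1 m0 m1 C0 C1 T0 T1 T2 T3 Hmax.
have [a0 a1] : 0 <= a /\ a <= 1 by move/andP: ha.
set k := expR (expR 1)^-1.
have k0 : 0 <= k by apply: expR_ge0.
have u0 : 0 <= x0 `^ a * x1 `^ (1 - a) by apply: mulr_ge0; apply: powR_ge0.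
have [D|D] := lerP (q0 * p1) (p0 * q1).
  have A := LA _ _ _ _ _ _ _ _ _ _ _ _ _ _ _ _ ha hb hs ht p0g p1g pp q0g q1g qq x0g x1g y0g y1g c0 c1 m0 m1 C0 C1 T0 T1 T2 T3 D.
  have A' : q0 * (a * x0) + q1 * x1 <= q0 * s + q1 * t by lra.
  have h := Hmax (a * x0) x1 (mulr_ge0 a0 x0g) x1g A'.
  rewrite (powRM _ a0 x0g) -mulrA in h.
  have hk := kappa_ge _ ha. rewrite -/k in hk.
  move: h hk u0; set P := a `^ a; set u := x0 `^ a * x1 `^ (1 - a); set V := X0 `^ a * X1 `^ (1 - a).
  move=> h hk u0. nra.
have D' : q1 * p0 <= p1 * q0 by lra.
have ha' : 0 <= 1 - a <= 1 by apply/andP; split; lra.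
have hb' : 0 <= 1 - b <= 1 by apply/andP; split; lra.
have B : (1 - a) * q1 * x1 + q0 * x0 <= q1 * t + q0 * s.
  apply: (LA _ _ _ _ _ _ _ _ _ _ _ _ _ _ _ _ ha' hb' ht hs p1g p0g _ q1g q0g _ x1g x0g y1g y0g c1 c0 _ _ C1 C0 _ _ _ _ D'); lra.
have B' : q0 * x0 + q1 * ((1 - a) * x1) <= q0 * s + q1 * t by lra.
have ha1 : 0 <= 1 - a by lra.
have h := Hmax x0 ((1 - a) * x1) x0g (mulr_ge0 ha1 x1g) B'.
rewrite (powRM _ ha1 x1g) mulrCA in h.
have hk := kappa_ge _ ha'. rewrite -/k in hk.
move: h hk u0; set P := (1 - a) `^ (1 - a); set u := x0 `^ a * x1 `^ (1 - a); set V := X0 `^ a * X1 `^ (1 - a).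
move=> h hk u0. nra.
Qed.

Definition mkb (z0 z1 : R) : 'I_2 -> R := fun l => if l == ord0 then z0 else z1.
Lemma mkb0 z0 z1 : mkb z0 z1 ord0 = z0. Proof. by rewrite /mkb eqxx. Qed.
Lemma mkb1 z0 z1 : mkb z0 z1 ord_max = z1. Proof. by []. Qed.

Lemma sum2 (F : 'I_2 -> R) : \sum_(j < 2) F j = F ord0 + F ord_max.
Proof. rewrite !big_ord_recr big_ord0 /= add0r. congr (F _ + F _); exact/val_inj. Qed.
Lemma prod2 (F : 'I_2 -> R) : \prod_(j < 2) F j = F ord0 * F ord_max.
Proof. rewrite !big_ord_recr big_ord0 /= mul1r. congr (F _ * F _); exact/val_inj. Qed.
Lemma ord2P (i : 'I_2) : i = ord0 \/ i = ord_max.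
Proof. case: i => [[|[|k]] Hk]; [left|right|]; try exact/val_inj. by []. Qed.

Lemma cd2 (g x : 'I_2 -> R) : cd_util g x = x ord0 `^ g ord0 * x ord_max `^ g ord_max.
Proof. by rewrite /cd_util prod2. Qed.

Lemma CD2 (g : 'I_2 -> R) : is_CD g -> [/\ 0 <= g ord0, 0 <= g ord_max & g ord_max = 1 - g ord0].
Proof.
move=> [h hs]; rewrite sum2 in hs.
have := h ord0; have := h ord_max => /andP[? ?] /andP[? ?]; split => //; lra.
Qed.

Lemma demand_bundle (g p e x : 'I_2 -> R) : is_CD g -> (forall j, 0 <= p j) ->
  (forall j, 0 < e j) -> demand g p e x ->
  [/\ p ord0 * x ord0 = g ord0 * (p ord0 * e ord0 + p ord_max * e ord_max),
      p ord_max * x ord_max = g ord_max * (p ord0 * e ord0 + p ord_max * e ord_max),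
      0 < p ord0 + p ord_max, 0 <= x ord0 & 0 <= x ord_max].
Proof.
move=> /CD2 [g0 g1 g01] hp he [[hx hb] hmax].
rewrite !sum2 in hb.
have := @demand_scalar (g ord0) (g ord_max) (p ord0) (p ord_max) (e ord0) (e ord_max)
  (x ord0) (x ord_max) g0 g1 _ (hp _) (hp _) (he _) (he _) (hx _) (hx _) hb.
have H : forall y0 y1 : R, 0 <= y0 -> 0 <= y1 ->
   p ord0 * y0 + p ord_max * y1 <= p ord0 * e ord0 + p ord_max * e ord_max ->
   y0 `^ g ord0 * y1 `^ g ord_max <= x ord0 `^ g ord0 * x ord_max `^ g ord_max.
  move=> y0 y1 y0p y1p hy.
  have := hmax (mkb y0 y1); rewrite !cd2 mkb0 mkb1; apply; split.
    by move=> l; case: (ord2P l) => ->; rewrite ?mkb0 ?mkb1.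
  by rewrite !sum2 mkb0 mkb1.
move=> /(_ ltac:(lra) H) [e0 e1 z0 z1]; split => //.
have hp0 := hp ord0; have hp1 := hp ord_max.
case: (eqVneq (p ord0) 0) => [h0|h0].
  have := z0 h0. case: (eqVneq (p ord_max) 0) => [h1|h1].
    have := z1 h1; lra.
  have : 0 < p ord_max by rewrite lt_neqAle eq_sym h1.
  lra.
have : 0 < p ord0 by rewrite lt_neqAle eq_sym h0.
lra.
Qed.

End S.

Arguments mkb {R}. Arguments mkb0 {R}. Arguments mkb1 {R}. Arguments sum2 {R}.
Arguments prod2 {R}. Arguments cd2 {R}. Arguments CD2 {R}. Arguments demand_bundle {R}.
Arguments upper_scalar {R}. Arguments amgm {R}. Arguments kappa_ge {R}. Arguments powRE {R}.
Section S2.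
Variable R : realType.

Lemma demand_opt (g : R) (p e x : 'I_2 -> R) : 0 < g < 1 ->
  0 < p ord0 -> 0 < p ord_max ->
  p ord0 * x ord0 = g * (p ord0 * e ord0 + p ord_max * e ord_max) ->
  p ord_max * x ord_max = (1 - g) * (p ord0 * e ord0 + p ord_max * e ord_max) ->
  0 < p ord0 * e ord0 + p ord_max * e ord_max ->
  demand (mkb g (1 - g)) p e x.
Proof.
move=> /andP[g0 g1] p0 p1 hx0 hx1 W0.
set W := p ord0 * e ord0 + p ord_max * e ord_max in hx0 hx1 W0.
have x0p : 0 < x ord0.
  by rewrite -(pmulr_rgt0 _ p0) hx0 mulr_gt0.
have x1p : 0 < x ord_max.
  by rewrite -(pmulr_rgt0 _ p1) hx1 mulr_gt0 // subr_gt0.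
split.
  split; first by move=> l; case: (ord2P l) => ->; apply: ltW.
  rewrite !sum2 -/W hx0 hx1; lra.
move=> y [hy hb]; rewrite !sum2 -/W in hb.
rewrite !cd2 !mkb0 !mkb1.
set A := p ord0 * y ord0 / (g * W). set B := p ord_max * y ord_max / ((1 - g) * W).
have xe0 : x ord0 = g * W / p ord0.
  by apply: (@mulfI _ (p ord0)); rewrite ?gt_eqF // hx0; field; rewrite gt_eqF.
have xe1 : x ord_max = (1 - g) * W / p ord_max.
  by apply: (@mulfI _ (p ord_max)); rewrite ?gt_eqF // hx1; field; rewrite gt_eqF.
have ey0 : y ord0 = x ord0 * A.
  by rewrite /A xe0; field; rewrite !gt_eqF //.
have ey1 : y ord_max = x ord_max * B.
  by rewrite /B xe1; field; rewrite !gt_eqF // subr_gt0.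
have hy0 := hy ord0. have hy1 := hy ord_max.
have A0 : 0 <= A by rewrite /A; apply: divr_ge0; apply: mulr_ge0 => //; lra.
have B0 : 0 <= B by rewrite /B; apply: divr_ge0; apply: mulr_ge0 => //; lra.
rewrite ey0 ey1 (powRM _ (ltW x0p) A0) (powRM _ (ltW x1p) B0) mulrACA.
have hg : 0 <= g <= 1 by apply/andP; split; lra.
have am := amgm _ _ _ hg A0 B0.
have s1 : g * A + (1 - g) * B <= 1.
  have -> : g * A + (1 - g) * B = (p ord0 * y ord0 + p ord_max * y ord_max) / W.
    by rewrite /A /B; field; rewrite !gt_eqF // subr_gt0.
  by rewrite ler_pdivrMr // mul1r.
have u0 : 0 <= x ord0 `^ g * x ord_max `^ (1 - g) by apply: mulr_ge0; apply: powR_ge0.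
rewrite -[X in _ <= X]mulr1; apply: ler_wpM2l => //; lra.
Qed.

Lemma good0_demand (p e x : 'I_2 -> R) : 0 < p ord0 -> 0 <= p ord_max ->
  0 <= x ord0 -> 0 <= x ord_max ->
  p ord0 * x ord0 + p ord_max * x ord_max <= p ord0 * e ord0 + p ord_max * e ord_max ->
  p ord0 * e ord0 + p ord_max * e ord_max <= p ord0 * x ord0 ->
  demand (mkb 1 0) p e x.
Proof.
move=> p0 p1 x0 x1 hb hW; split.
  split; first by move=> l; case: (ord2P l) => ->.
  by rewrite !sum2.
move=> y [hy hyb]; rewrite !sum2 in hyb.
rewrite !cd2 !mkb0 !mkb1 !powRr0 !mulr1 !powRr1 //.
have : p ord0 * y ord0 <= p ord0 * x ord0.
  have := mulr_ge0 p1 (hy ord_max); lra.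
by rewrite ler_pM2l.
Qed.
Lemma part1_core (al be e1 e2 p q xm xo Xm Xo : 'I_2 -> R) :
 is_CD al -> is_CD be -> (forall l, 0 < e1 l) -> (forall l, 0 < e2 l) ->
 (forall l, e1 l + e2 l = 1) ->
 (forall l, 0 <= p l) -> (forall l, xm l + xo l = 1) -> (forall l, 0 <= xm l) ->
 demand be p e2 xo ->
 (forall l, 0 <= q l) -> (forall l, Xm l + Xo l = 1) -> demand al q e1 Xm -> demand be q e2 Xo ->
 cd_util al xm <= expR (expR 1)^-1 * cd_util al Xm.
Proof.
move=> hal hbe he1 he2 hsum hp hx hxm dxo hq hX dXm dXo.
have [m0 m1 pp y0g y1g] := demand_bundle _ _ _ _ hbe hp he2 dxo.
have [T0 T1 qq _ _] := demand_bundle _ _ _ _ hal hq he1 dXm.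
have [T2 T3 _ _ _] := demand_bundle _ _ _ _ hbe hq he2 dXo.
have [a0 a1 a01] := CD2 _ hal. have [b0 b1 b01] := CD2 _ hbe.
have [_ Hmax] := dXm.
rewrite !cd2 a01.
have es0 : e2 ord0 = 1 - e1 ord0 by have := hsum ord0; lra.
have es1 : e2 ord_max = 1 - e1 ord_max by have := hsum ord_max; lra.
rewrite es0 es1 b01 in m0 m1 T2 T3. rewrite a01 in T1.
have hs : 0 < e1 ord0 < 1 by have := he2 ord0; have := he1 ord0; rewrite es0; move=> ? ?; apply/andP; split; lra.
have ht : 0 < e1 ord_max < 1 by have := he2 ord_max; have := he1 ord_max; rewrite es1; move=> ? ?; apply/andP; split; lra.
have ha : 0 <= al ord0 <= 1 by apply/andP; split; lra.
have hb : 0 <= be ord0 <= 1 by apply/andP; split; lra.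
apply: (upper_scalar _ _ _ _ _ _ _ _ _ _ _ _ _ _ _ _ ha hb hs ht (hp _) (hp _) pp (hq _) (hq _) qq (hxm _) (hxm _) y0g y1g
   (hx _) (hx _) m0 m1 (hX _) (hX _) T0 T1 T2 T3).
move=> z0 z1 z0p z1p hz.
have := Hmax (mkb z0 z1); rewrite !cd2 mkb0 mkb1 a01; apply; split.
  by move=> l; case: (ord2P l) => ->; rewrite ?mkb0 ?mkb1.
by rewrite !sum2 mkb0 mkb1.
Qed.
End S2.


Arguments mkb {R}. Arguments mkb0 {R}. Arguments mkb1 {R}. Arguments sum2 {R}.
Arguments prod2 {R}. Arguments cd2 {R}. Arguments CD2 {R}. Arguments demand_bundle {R}.
Arguments upper_scalar {R}. Arguments amgm {R}. Arguments kappa_ge {R}. Arguments powRE {R}.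
Arguments part1_core {R}. Arguments demand_opt {R}. Arguments good0_demand {R}.

Section S3.
Variable R : realType.

Lemma part1 (a e : 'I_2 -> 'I_2 -> R) (i : 'I_2) (b : 'I_2 -> R) :
  (forall k, is_CD (a k)) -> pos_normalized e -> is_CD b ->
  forall x x' : 'I_2 -> 'I_2 -> R,
  CE_alloc (misreport a i b) e x' -> CE_alloc a e x ->
  cd_util (a i) (x' i) <= expR (expR 1)^-1 * cd_util (a i) (x i).
Proof.
move=> ha [hep hes] hb x x' [p [hp [hc hd]]] [q [hq [hc' hd']]].
have hsum : forall l, e ord0 l + e ord_max l = 1.
  by move=> l; rewrite -(hes l) sum2.
have hx' : forall l, x' ord0 l + x' ord_max l = 1.
  by move=> l; have := hc l; rewrite !sum2 => ->; exact: hsum.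
have hx : forall l, x ord0 l + x ord_max l = 1.
  by move=> l; have := hc' l; rewrite !sum2 => ->; exact: hsum.
have n10 : (ord_max == ord0 :> 'I_2) = false by [].
have n01 : (ord0 == ord_max :> 'I_2) = false by [].
case: (ord2P i) => hi; subst i.
  have dm := hd ord_max. rewrite /misreport /= ?n10 in dm.
  have [[hxm _] _] := hd ord0.
  exact: (part1_core _ _ _ _ _ _ _ _ _ _ (ha ord0) (ha ord_max) (hep ord0) (hep ord_max)
    hsum hp hx' hxm dm hq hx (hd' ord0) (hd' ord_max)).
have dm := hd ord0. rewrite /misreport /= ?n01 in dm.
have [[hxm _] _] := hd ord_max.
apply: (part1_core _ _ _ _ _ _ _ _ _ _ (ha ord_max) (ha ord0) (hep ord_max) (hep ord0)
    _ hp _ hxm dm hq _ (hd' ord_max) (hd' ord0)).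
- by move=> l; rewrite addrC.
- by move=> l; rewrite addrC.
- by move=> l; rewrite addrC.
Qed.
End S3.


Arguments mkb {R}. Arguments mkb0 {R}. Arguments mkb1 {R}. Arguments sum2 {R}.
Arguments prod2 {R}. Arguments cd2 {R}. Arguments CD2 {R}. Arguments demand_bundle {R}.
Arguments upper_scalar {R}. Arguments amgm {R}. Arguments kappa_ge {R}. Arguments powRE {R}.
Arguments part1_core {R}. Arguments demand_opt {R}. Arguments good0_demand {R}.


Section S4.
Variable R : realType.

Lemma isCD_mkb (z : R) : 0 <= z <= 1 -> is_CD (mkb z (1 - z)).
Proof.
move=> /andP[z0 z1]; split.
  by move=> j; case: (ord2P j) => ->; rewrite ?mkb0 ?mkb1; apply/andP; split; lra.
by rewrite sum2 mkb0 mkb1; ring.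
Qed.

Lemma isCD_10 : is_CD (mkb (1 : R) 0).
Proof.
have := @isCD_mkb 1; rewrite subrr; apply; apply/andP; split; lra.
Qed.

Lemma part2 (eps : R) : 0 < eps ->
  exists (a e : 'I_2 -> 'I_2 -> R) (i : 'I_2) (b : 'I_2 -> R),
    (forall k, is_CD (a k)) /\ pos_normalized e /\ is_CD b /\
    (exists x, CE_alloc a e x) /\
    exists x' : 'I_2 -> 'I_2 -> R,
      CE_alloc (misreport a i b) e x' /\
      forall x, CE_alloc a e x ->
        (expR (expR 1)^-1 - eps) * cd_util (a i) (x i) < cd_util (a i) (x' i).
Proof.
move=> ep.
have n10 : (ord_max == ord0 :> 'I_2) = false by [].
have n00 : (ord0 == ord0 :> 'I_2) = true by [].
set c : R := (expR 1)^-1.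
set k : R := expR c.
have e1 : 1 < (expR 1 : R) by rewrite expR_gt1.
have c0 : 0 < c by rewrite invr_gt0 expR_gt0.
have c1 : c < 1 by rewrite /c invf_lt1 // expR_gt0.
have k0 : 0 < k by apply: expR_gt0.
set t : R := eps / (2 * (k + eps)).
have t0 : 0 < t by rewrite /t divr_gt0 // mulr_gt0 // addr_gt0.
have tt : t * (2 * (k + eps)) = eps by rewrite /t divfK // gt_eqF // mulr_gt0 // addr_gt0.
have t1 : t < 1/2 by nra.
have kt : k * t < eps by nra.
set d : R := 1 - (1 - c) * t.
have d0 : 1 - t <= d by rewrite /d; nra.
have d1 : d <= 1 by rewrite /d; nra.
have dp : 0 < d by lra.
set r : R := 2 * d / (1 - c).
have rp : 0 < r by rewrite /r divr_gt0 // ?subr_gt0 // mulr_gt0.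
have cd1 : c / (2 * d) < 1.
  by rewrite ltr_pdivrMr ?mulr_gt0 //; lra.
have cd0 : 0 < c / (2 * d) by rewrite divr_gt0 // mulr_gt0.
have cn : 1 - c != 0 by rewrite gt_eqF // subr_gt0.
have dn : 1 - (1 - c) * t != 0 by rewrite -/d gt_eqF.
have dn' : d != 0 by rewrite gt_eqF.
have hW : r * (1/2) + 1 * t = (1 - c)^-1.
  rewrite /r /d; field. by rewrite cn.
have hX0 : r * (c / (2 * d)) = c * (r * (1 / 2) + 1 * t).
  rewrite hW /r; field. by rewrite cn dn'.
have hX1 : r * (1 - c / (2 * d)) + 1 * 0 = r * (1 / 2) + 1 * (1 - t).
  rewrite /r /d; field. by rewrite cn dn.
exists (fun j => if j == ord0 then mkb c (1 - c) else mkb 1 0).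
exists (fun j => if j == ord0 then mkb (1/2) t else mkb (1/2) (1 - t)).
exists ord0, (mkb 1 0).
split.
  move=> j; case: (ord2P j) => ->; rewrite ?n00 ?n10; last exact: isCD_10.
  by apply: isCD_mkb; apply/andP; split; lra.
split.
  split.
    by move=> i j; case: (ord2P i) => ->; case: (ord2P j) => ->; rewrite ?n00 ?n10 ?mkb0 ?mkb1; lra.
  by move=> j; rewrite sum2 n00 n10; case: (ord2P j) => ->; rewrite ?mkb0 ?mkb1; lra.
split; first exact: isCD_10.
split.
  exists (fun j => if j == ord0 then mkb (c / (2 * d)) 1 else mkb (1 - c / (2 * d)) 0).
  exists (mkb r 1); split.
    by move=> j; case: (ord2P j) => ->; rewrite ?mkb0 ?mkb1; lra.
  split.
    by move=> j; rewrite !sum2 !n00 !n10; case: (ord2P j) => ->; rewrite ?mkb0 ?mkb1; lra.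
  move=> j; case: (ord2P j) => ->; rewrite ?n00 ?n10.
    apply: demand_opt; rewrite ?mkb0 ?mkb1 //.
    - by apply/andP.
    - rewrite hW /r; field. by rewrite ?cn ?dn ?dn'.
    - by rewrite hW invr_gt0 subr_gt0.
  apply: good0_demand; rewrite ?mkb0 ?mkb1 //; try lra.
have he0 : forall j, 0 < mkb (1/2) t j.
  by move=> j; case: (ord2P j) => ->; rewrite ?mkb0 ?mkb1; lra.
have he1 : forall j, 0 < mkb (1/2) (1 - t) j.
  by move=> j; case: (ord2P j) => ->; rewrite ?mkb0 ?mkb1; lra.
exists (fun j => if j == ord0 then mkb (1/2) 1 else mkb (1/2) 0).
split.
  exists (mkb 1 0); split.
    by move=> j; case: (ord2P j) => ->; rewrite ?mkb0 ?mkb1; lra.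
  split.
    by move=> j; rewrite !sum2 !n00 !n10; case: (ord2P j) => ->; rewrite ?mkb0 ?mkb1; lra.
  move=> j; rewrite /misreport; case: (ord2P j) => ->; rewrite /= ?n00 ?n10 /=;
  apply: good0_demand; rewrite ?mkb0 ?mkb1 //; lra.
move=> x [q [hq [hcl hd]]].
have dE : d = 1 - (1 - c) * t by [].
have kE : k = expR c by [].
have cE : c = (expR 1)^-1 by [].
clearbody r d t k c.
rewrite n00 !cd2 !mkb0 !mkb1.
have dA := hd ord0. have dB := hd ord_max. rewrite n00 in dA. rewrite n10 in dB.
have hc : 0 <= c <= 1 by apply/andP; split; lra.
have [T0 T1 qq _ _] := demand_bundle _ _ _ _ (isCD_mkb _ hc) hq he0 dA.
have [U0 U1 _ _ x11g] := demand_bundle _ _ _ _ isCD_10 hq he1 dB.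
rewrite !mkb0 !mkb1 in T0 T1 U0 U1.
have cl0 := hcl ord0. have cl1 := hcl ord_max.
rewrite !sum2 !n00 !n10 !mkb0 !mkb1 in cl0 cl1.
have q0g := hq ord0. have q1g := hq ord_max.
have q1p : 0 < q ord_max.
  rewrite lt_neqAle q1g andbT; apply/negP => /eqP h.
  rewrite -h in T1 qq.
  have : (1 - c) * (q ord0 * (1/2)) = 0 by lra.
  move=> /eqP; rewrite mulf_eq0 => /orP[/eqP|/eqP]; lra.
have x11 : x ord_max ord_max = 0.
  have : q ord_max * x ord_max ord_max = 0 by lra.
  by move=> /eqP; rewrite mulf_eq0 => /orP[/eqP|/eqP] //; lra.
have x01 : x ord0 ord_max = 1 by lra.
rewrite x01 mulr1 in T1.
have q0p : 0 < q ord0.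
  have : 0 < (1 - c) * (q ord0 * (1/2) + q ord_max * t) by lra.
  rewrite pmulr_rgt0 ?subr_gt0 //; nra.
have key : q ord0 * (2 * d * x ord0 ord0 - c) = 0.
  have -> : q ord0 * (2 * d * x ord0 ord0 - c) = 2 * d * (q ord0 * x ord0 ord0) - c * q ord0 by ring.
  rewrite T0.
  have -> : 2 * d * (c * (q ord0 * (1 / 2) + q ord_max * t)) - c * q ord0
     = 2 * c * t * (q ord_max - (1 - c) * (q ord0 * (1 / 2) + q ord_max * t)) by rewrite dE; field.
  by rewrite -T1 subrr mulr0.
have x00 : x ord0 ord0 = c / (2 * d).
  move/eqP: key; rewrite mulf_eq0 gt_eqF //= subr_eq0 => /eqP h.
  by rewrite -h mulrC mulKf // mulf_neq0 // gt_eqF.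
rewrite x00 x01 !powR1 /= !mulr1.
have cn0 : c != 0 by rewrite gt_eqF.
have h12 : (1 / 2 : R) = c / (2 * d) * (d * c^-1).
  by field; rewrite ?cn0 ?dn'.
have ci0 : 0 <= c^-1 by rewrite invr_ge0 ltW.
rewrite h12 (powRM _ (ltW cd0) (mulr_ge0 (ltW dp) ci0)) (powRM _ (ltW dp) ci0).
have ci : c^-1 = expR 1 by rewrite cE invrK.
rewrite ci -expRM mul1r -kE.
have P0 : 0 < (c / (2 * d)) `^ c by apply: powR_gt0.
have D1 : d <= d `^ c by apply: ger1_powR; [apply/andP; split; lra | lra].
have h1 : k * (1 - t) <= k * d by rewrite ler_pM2l.
have h2 : k * d <= k * d `^ c by rewrite ler_pM2l.
have h3 : k - eps < d `^ c * k by lra.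
nra.
Qed.
End S4.

Theorem proposition2 (R : realType) :
  (* upper bound: ratio <= e^{1/e} for all 2x2 CD economies with positive endowments *)
  (forall (a e : 'I_2 -> 'I_2 -> R) (i : 'I_2) (b : 'I_2 -> R),
      (forall k, is_CD (a k)) -> pos_normalized e -> is_CD b ->
      forall x x' : 'I_2 -> 'I_2 -> R,
        CE_alloc (misreport a i b) e x' -> CE_alloc a e x ->
        cd_util (a i) (x' i) <= expR (expR 1)^-1 * cd_util (a i) (x i)) /\
  (* tightness: the supremum e^{1/e} is approached *)
  (forall eps : R, 0 < eps ->
     exists (a e : 'I_2 -> 'I_2 -> R) (i : 'I_2) (b : 'I_2 -> R),
       (forall k, is_CD (a k)) /\ pos_normalized e /\ is_CD b /\
       (exists x, CE_alloc a e x) /\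
       exists x' : 'I_2 -> 'I_2 -> R,
         CE_alloc (misreport a i b) e x' /\
         forall x, CE_alloc a e x ->
           (expR (expR 1)^-1 - eps) * cd_util (a i) (x i) < cd_util (a i) (x' i)).
Proof.
split; [exact: (@part1 R) | exact: (@part2 R)].
Qed.
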